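(* Let $i,j\geq 0$ and $R=(\gamma_{\mathrm{low}},\gamma_{\mathrm{mid}},\gamma_{\mathrm{up}})\in\mathcal{R}_{i,j}$, and let $\tau(R):=(\mathrm{mir}(\gamma_{\mathrm{up}}),\mathrm{mir}(\gamma_{\mathrm{mid}}),\mathrm{mir}(\gamma_{\mathrm{low}}))$, where $\mathrm{mir}(c_1\cdots c_n):=c_n\cdots c_1$ is the mirror word. Then $\tau(R)\in\mathcal{G}_{i,j}$ if and only if $R\in\mathcal{G}_{i,j}$.
   Context: A walk is a finite word on $\{N,E\}$, viewed as a lattice path from $(0,0)$ with steps $N=(0,1)$, $E=(1,0)$. For walks $\gamma,\gamma'$, $\gamma'$ is above $\gamma$ if they have the same endpoint and no East step of $\gamma$ lies strictly above the East step of $\gamma'$ in the same vertical column. For $\nu$ ending at $(i,j)$, $\mathcal{W}_\nu$ is the set of walks above $\nu$. For $\gamma\in\mathcal{W}_\nu$ and a point $p=(x,y)$ on $\gamma$, let $x'$ be the abscissa of the North step of $\nu$ from ordinate $y$ to $y+1$ ($x'=i$ if $y=j$) and $\ell(p)=x'-x$. If $p$ is preceded by $E$ and followed by $N$ in $\gamma$, let $p'$ be the next point after $p$ on $\gamma$ with $\ell(p')=\ell(p)$, and let $\mathrm{push}_p(\gamma)$ be obtained by moving the $E$ step preceding $p$ to just after $p'$. $\mathrm{Tam}(\nu)$ is the order on $\mathcal{W}_\nu$ given by the reflexive-transitive closure of $\gamma\leq\mathrm{push}_p(\gamma)$. $\mathcal{G}_{i,j}$ is the set of triples $(\nu,\gamma,\gamma')$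 with $\nu$ ending at $(i,j)$, $\gamma,\gamma'\in\mathcal{W}_\nu$ and $\gamma\leq\gamma'$ in $\mathrm{Tam}(\nu)$. $\mathcal{R}_{i,j}$ is the set of triples $(\nu,\gamma,\gamma')$ of walks all ending at $(i,j)$ with $\gamma'$ above $\gamma$ and $\gamma$ above $\nu$. *)

(* Defs.v *)
From HB Require Import structures.
From mathcomp Require Import all_boot all_order all_algebra.
From Stdlib Require Import Relation_Operators.
Set Implicit Arguments. Unset Strict Implicit. Unset Printing Implicit Defensive.
Import GRing.Theory Num.Theory.

(* Steps: N = (0,1), E = (1,0). *)
Inductive step := N | E.

Definition step_eqb (a b : step) : bool :=
  match a, b with N, N | E, E => true | _, _ => false end.
Lemma step_eqP : Equality.axiom step_eqb.
Proof. by case; case; constructor. Qed.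
HB.instance Definition _ := hasDecEq.Build step step_eqP.

Definition walk := seq step.

Definition endpoint (w : walk) : nat * nat := (count_mem E w, count_mem N w).

(* heights of the East steps in order: the East step in column x
   (from abscissa x to x+1) is at ordinate  nth 0 (eheights w) x. *)
Fixpoint eheights_aux (h : nat) (w : walk) : seq nat :=
  match w with
  | [::] => [::]
  | N :: w' => eheights_aux h.+1 w'
  | E :: w' => h :: eheights_aux h w'
  end.
Definition eheights (w : walk) := eheights_aux 0 w.

(* abscissae of the North steps in order: the North step from ordinate y to
   y+1 is at abscissa  nth 0 (nabscissae w) y. *)
Fixpoint nabscissae_aux (x : nat) (w : walk) : seq nat :=
  match w with
  | [::] => [::]
  | E :: w' => nabscissae_aux x.+1 w'
  | N :: w' => x :: nabscissae_aux x w'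
  end.
Definition nabscissae (w : walk) := nabscissae_aux 0 w.

Definition above (g' g : walk) : Prop :=
  endpoint g' = endpoint g /\
  forall x, x < size (eheights g) ->
    ~ (nth 0 (eheights g') x < nth 0 (eheights g) x).

Definition inW (nu g : walk) : Prop := above g nu.

Definition point (g : walk) (k : nat) : nat * nat := endpoint (take k g).

(* x'(y): abscissa of the North step of nu from ordinate y to y+1,
   and x' = i (the abscissa of the endpoint) if y = j. *)
Definition xprime (nu : walk) (y : nat) : nat :=
  nth (endpoint nu).1 (nabscissae nu) y.

Definition ell (nu g : walk) (k : nat) : int :=
  ((xprime nu (point g k).2)%:Z - ((point g k).1)%:Z)%R.

(* push_p(g) = g' where p is the point after k steps of g, p is preceded by E
   and followed by N, p' is the point after k' steps (the next point after p
   with ell(p') = ell(p)), and the E step preceding p is moved just after p'. *)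
Definition push_step (nu g g' : walk) : Prop :=
  exists k k',
    [/\ 0 < k, k < k' & k' <= size g] /\
    [/\ nth N g k.-1 = E & nth N g k = N] /\
    ell nu g k' = ell nu g k /\
    (forall m, k < m -> m < k' -> ell nu g m <> ell nu g k) /\
    g' = take k.-1 g ++ drop k (take k' g) ++ E :: drop k' g.

Definition tam_le (nu : walk) : walk -> walk -> Prop :=
  clos_refl_trans walk (fun a b => [/\ inW nu a, inW nu b & push_step nu a b]).

Definition inG (i j : nat) (nu g g' : walk) : Prop :=
  [/\ endpoint nu = (i, j), inW nu g, inW nu g' & tam_le nu g g'].

Definition inR (i j : nat) (nu g g' : walk) : Prop :=
  [/\ endpoint nu = (i, j), endpoint g = (i, j), endpoint g' = (i, j),
      above g' g & above g nu].

Definition mir (w : walk) : walk := rev w.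

(* Main.v *)
Require Import Defs.
From mathcomp Require Import all_boot all_order all_algebra zify.
From Stdlib Require Import Lia Classical Relation_Operators Operators_Properties.
Import Order.TTheory GRing.Theory Num.Theory.
Set Implicit Arguments. Unset Strict Implicit.
Module Part1.

Local Open Scope ring_scope.

Definition FailAt (a b : nat -> int) (s r : nat) : Prop :=
  (s < r)%N /\ forall t, (s < t)%N -> (t <= r)%N -> a s < a t /\ a r + b r < a t + b s.
Definition FailAt' (a b : nat -> int) (s r : nat) : Prop :=
  (s < r)%N /\ forall t, (s <= t)%N -> (t < r)%N -> b r < b t /\ a s + b s < a r + b t.
Definition Fail a b n := exists s r, (r <= n)%N /\ FailAt a b s r.

Lemma last_argmin (f : nat -> int) lo hi : (lo < hi)%N ->
  exists m, [/\ (lo < m <= hi)%N, (forall w, (lo < w <= hi)%N -> f m <= f w) &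
                (forall w, (m < w <= hi)%N -> f m < f w)].
Proof.
move=> lohi; have [d ->] : exists d, hi = (lo + d.+1)%N by exists (hi - lo.+1)%N; lia.
elim: d => [|d [m [Hm H1 H2]]].
  exists (lo + 1)%N; split; [lia| |]; move=> w Hw; have -> : w = (lo+1)%N by lia.
  - by [].
  - lia.
case: (lerP (f (lo + d.+2)%N) (f m)) => Hc.
  exists (lo + d.+2)%N; split; [lia| |].
  - move=> w Hw; case: (w =P (lo + d.+2)%N) => [->//|Hne].
    apply: (le_trans Hc); apply: H1; lia.
  - move=> w Hw; lia.
exists m; split; [lia| |].
- move=> w Hw; case: (w =P (lo + d.+2)%N) => [->|Hne]; first exact: ltW.
  apply: H1; lia.
- move=> w Hw; case: (w =P (lo + d.+2)%N) => [->//|Hne].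
  apply: H2; lia.
Qed.

Lemma descent (a b : nat -> int) (c : int) s t :
  (s < t)%N -> b t < c ->
  (forall u, (s <= u)%N -> (u < t)%N -> c <= b u) ->
  (forall v, (s < v)%N -> (v <= t)%N -> a s < a v) ->
  (forall u, (s <= u)%N -> (u < t)%N -> ~ FailAt a b u t) -> False.
Proof.
move=> st btc Hc Hs Hnf.
suff H : forall d u, (t - u <= d)%N -> (s <= u)%N -> (u < t)%N ->
   (forall v, (u < v)%N -> (v <= t)%N -> a u < a v) -> False.
  by apply: (H t s) => //; lia.
elim=> [|d IH] u Hd su ut Hu; first lia.
have Hn := Hnf u su ut.
have [v [uv vt Hv]] : exists v, [/\ (u < v)%N, (v <= t)%N & a v + b u <= a t + b t].
  apply: NNPP => Hne; apply: Hn; split => // w uw wt; split; first exact: Hu.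
  apply: NNPP => Hw; apply: Hne; exists w; split => //.
  by rewrite leNgt; apply/negP.
have cu := Hc u su ut.
have avt : a v < a t by lia.
have [m [Hm H1 H2]] := last_argmin a ut.
have mt : (m < t)%N.
  case: (m =P t) => [Em|]; last lia.
  have := H1 v (ltac:(lia)); rewrite Em; lia.
apply: (IH m); try lia.
by move=> w mw wt; apply: H2; lia.
Qed.

Lemma minimal_sym (a b : nat -> int) s r : FailAt a b s r ->
  (forall s2 r2, (s <= s2)%N -> (r2 <= r)%N -> (r2 - s2 < r - s)%N -> ~ FailAt a b s2 r2) ->
  FailAt' a b s r.
Proof.
move=> [sr Hf] Hmin.
have Hr := Hf r sr (leqnn r).
have claim : forall t, (s < t)%N -> (t < r)%N -> b s <= b t.
  elim/ltn_ind => t IH st tr; rewrite leNgt; apply/negP => btc.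
  apply: (descent (c := b s) st btc).
  - move=> u su ut; case: (u =P s) => [->//|ne]; apply: IH; lia.
  - move=> v sv vt; have vr : (v <= r)%N by lia.
    exact: (Hf v sv vr).1.
  - by move=> u su ut; apply: Hmin; lia.
split=> // t st tr.
case: (t =P s) => [->|ne]; first lia.
have := claim t (ltac:(lia)) tr; have := Hf t (ltac:(lia)) (ltac:(lia)); lia.
Qed.

Lemma fail_both (a b : nat -> int) s r : FailAt a b s r ->
  exists s' r', [/\ (s <= s')%N, (r' <= r)%N, FailAt a b s' r' & FailAt' a b s' r'].
Proof.
move: {2}(r - s)%N (leqnn (r - s)%N) => d; elim: d s r => [|d IH] s r Hd Hf.
  by case: Hf => sr _; lia.
case: (classic (exists s2 r2, [/\ (s <= s2)%N, (r2 <= r)%N, (r2 - s2 < r - s)%N & FailAt a b s2 r2])).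
  move=> [s2 [r2 [H1 H2 H3 H4]]].
  have [s' [r' [K1 K2 K3 K4]]] := IH s2 r2 (ltac:(lia)) H4.
  exists s', r'; split => //; lia.
move=> Hn; exists s, r; split => //.
apply: minimal_sym => // s2 r2 H1 H2 H3 H4; apply: Hn; exists s2, r2; split => //.
Qed.

Definition rv (n : nat) (f : nat -> int) := fun t => f (n - t)%N.

Lemma FailAt'_rev (a b : nat -> int) n s r : (r <= n)%N -> FailAt' a b s r ->
  FailAt (rv n b) (rv n a) (n - r) (n - s).
Proof.
rewrite /rv => rn [sr H]; split; first lia.
move=> t H1 H2.
have -> : (n - (n - r) = r)%N by lia.
have -> : (n - (n - s) = s)%N by lia.
have := H (n - t)%N (ltac:(lia)) (ltac:(lia)); lia.
Qed.

Lemma Fail_ext (a b a' b' : nat -> int) n :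
  (forall t, (t <= n)%N -> a t = a' t /\ b t = b' t) -> Fail a b n -> Fail a' b' n.
Proof.
move=> Hext [s [r [rn [sr H]]]]; exists s, r; split => //; split => // t st tr.
have [E1 E2] := Hext s (ltac:(lia)); have [E3 E4] := Hext r rn; have [E5 E6] := Hext t (ltac:(lia)).
rewrite -E1 -E2 -E3 -E4 -E5; exact: H.
Qed.

Lemma Fail_sym1 (a b : nat -> int) n : Fail a b n -> Fail (rv n b) (rv n a) n.
Proof.
move=> [s [r [rn Hf]]].
have [s' [r' [K1 K2 K3 K4]]] := fail_both Hf.
exists (n - r')%N, (n - s')%N; split; first lia.
apply: FailAt'_rev => //; lia.
Qed.

Lemma Fail_sym (a b : nat -> int) n : Fail a b n <-> Fail (rv n b) (rv n a) n.
Proof.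
split; first exact: Fail_sym1.
move=> H; have := Fail_sym1 H; apply: Fail_ext => t tn; rewrite /rv.
have -> : (n - (n - t) = t)%N by lia.
by [].
Qed.

Definition ind (y0 y1 t : nat) : int := if (y0 <= t < y1)%N then 1 else 0.

Lemma seqA (a b : nat -> int) y0 y1 s r : (y0 < y1)%N ->
  (forall t, (y0 < t)%N -> (t < y1)%N -> a y0 < a t) -> a y1 <= a y0 ->
  FailAt a b s r ->
  FailAt (fun t => a t + ind y0 y1 t) (fun t => b t - ind y0 y1 t) s r.
Proof.
move=> y01 Ha Hy1 [sr H]; split => // t st tr.
have [H1 H2] := H t st tr.
rewrite /ind.
case: (boolP (y0 <= s < y1)%N) => Hs; case: (boolP (y0 <= t < y1)%N) => Ht;
  case: (boolP (y0 <= r < y1)%N) => Hr; try lia.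
all: exfalso.
all: have Hy1r : (y1 <= r)%N by lia.
all: have [K1 _] := H y1 (ltac:(lia)) Hy1r.
all: have K2 : a y0 <= a s by case: (s =P y0) => [->//|ne]; apply/ltW/Ha; lia.
all: lia.
Qed.

Lemma FailAt_same (a b a' b' : nat -> int) s r :
  (forall t, (s <= t <= r)%N -> a' t + b' t = a t + b t) ->
  (forall t, (s < t <= r)%N -> a' t - a' s <= a t - a s) ->
  FailAt a' b' s r -> FailAt a b s r.
Proof.
move=> HP HD [sr H]; split => // t st tr.
have [H1 H2] := H t st tr.
have := HP s (ltac:(lia)); have := HP r (ltac:(lia)); have := HD t (ltac:(lia)).
lia.
Qed.

Lemma seqB (a b : nat -> int) n y0 y1 :
  (forall s r, (r <= n)%N -> ~ FailAt a b s r) ->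
  (forall t, (t < y0)%N -> b t = 0) -> (forall t, (t <= n)%N -> 0 <= b t) ->
  0 < b y0 -> (y0 < y1)%N -> (y1 <= n)%N ->
  (forall t, (y0 < t)%N -> (t < y1)%N -> a y0 < a t) -> a y1 <= a y0 ->
  (forall t, (y0 <= t)%N -> (t < y1)%N -> 1 <= b t) /\
  (forall s r, (r <= n)%N ->
     ~ FailAt (fun t => a t + ind y0 y1 t) (fun t => b t - ind y0 y1 t) s r).
Proof.
move=> Hnf Hb0 Hbp Hby0 y01 y1n Ha Hy1.
have Hi : forall t, (y0 <= t)%N -> (t < y1)%N -> 1 <= b t.
  elim/ltn_ind => t IH y0t ty1; case: (t =P y0) => [->|ne]; first lia.
  rewrite leNgt; apply/negP => btc.
  apply: (descent (c := 1) (s := y0)) (btc) _ _ _; first lia.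
  - by move=> u su ut; apply: IH; lia.
  - by move=> v sv vt; apply: Ha; lia.
  - by move=> u su ut; apply: Hnf; lia.
split => // s r rn Hf.
case: (Hf) => sr Hf'.
case: (boolP (y0 <= s)%N) => Hs.
  apply: (Hnf s r rn); apply: FailAt_same Hf.
  - by move=> t _ /=; lia.
  - move=> t Ht /=; rewrite /ind.
    case: (boolP (y0 <= s < y1)%N); case: (boolP (y0 <= t < y1)%N); lia.
case: (boolP (r < y0)%N) => Hr.
  apply: (Hnf s r rn); apply: FailAt_same Hf.
  - by move=> t _ /=; lia.
  - move=> t Ht /=; rewrite /ind.
    case: (boolP (y0 <= s < y1)%N); case: (boolP (y0 <= t < y1)%N); lia.
have bs0 : b s = 0 by apply: Hb0; lia.
have Hind : forall t, ind y0 y1 t = if (y0 <= t < y1)%N then 1 else 0 by [].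
case: (boolP (y1 <= r)%N) => Hr1.
  have [K1 K2] := Hf' y1 (ltac:(lia)) Hr1.
  move: K1 K2; rewrite /ind.
  have -> : (y0 <= s < y1)%N = false by lia.
  have -> : (y0 <= y1 < y1)%N = false by lia.
  move=> K1 K2.
  apply: (Hnf s r rn); split => // t st tr.
  have [L1 L2] := Hf' t st tr; move: L1 L2; rewrite /ind.
  have -> : (y0 <= s < y1)%N = false by lia.
  have -> : (y0 <= r < y1)%N = false by lia.
  case: (boolP (y0 <= t < y1)%N) => Ht L1 L2; last lia.
  have : a y0 <= a t by case: (t =P y0) => [->//|ne]; apply/ltW/Ha; lia.
  lia.
case: (r =P y0) => [Ery0|Hne].
  have [K1 K2] := Hf' r sr (leqnn r); move: K1 K2; rewrite /ind.
  have -> : (y0 <= s < y1)%N = false by lia.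
  have -> : (y0 <= r < y1)%N = true by lia.
  rewrite Ery0; lia.
apply: (Hnf y0 r rn); split; first lia.
move=> t st tr.
have [L1 L2] := Hf' t (ltac:(lia)) tr; move: L1 L2; rewrite /ind.
have -> : (y0 <= s < y1)%N = false by lia.
have -> : (y0 <= r < y1)%N = true by lia.
have -> : (y0 <= t < y1)%N = true by lia.
have := Ha t (ltac:(lia)) (ltac:(lia)); have := Hby0; lia.
Qed.

End Part1.
Import Part1.

Module Part2.

Definition cE (w : walk) : nat := count_mem E w.
Definition cN (w : walk) : nat := count_mem N w.
Arguments cE : simpl never.
Arguments cN : simpl never.
Lemma cE_nil : cE [::] = 0%N. Proof. by []. Qed.
Lemma cN_nil : cN [::] = 0%N. Proof. by []. Qed.
Lemma cE_E w : cE (E :: w) = (cE w).+1. Proof. by []. Qed.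
Lemma cE_N w : cE (N :: w) = cE w. Proof. by []. Qed.
Lemma cN_E w : cN (E :: w) = cN w. Proof. by []. Qed.
Lemma cN_N w : cN (N :: w) = (cN w).+1. Proof. by []. Qed.
Lemma cE_cat w1 w2 : cE (w1 ++ w2) = (cE w1 + cE w2)%N. Proof. exact: count_cat. Qed.
Lemma cN_cat w1 w2 : cN (w1 ++ w2) = (cN w1 + cN w2)%N. Proof. exact: count_cat. Qed.
Definition cEs := (cE_nil, cN_nil, cE_E, cE_N, cN_E, cN_N).
Ltac li := rewrite ?cEs; lia.

Lemma nab_cat x w1 w2 : nabscissae_aux x (w1 ++ w2) =
  nabscissae_aux x w1 ++ nabscissae_aux (x + cE w1) w2.
Proof.
elim: w1 x => [|c w1 IH] x /=; first by rewrite addn0.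
case: c => /=; rewrite IH //; congr (_ ++ _); congr nabscissae_aux; li.
Qed.

Lemma eh_cat h w1 w2 : eheights_aux h (w1 ++ w2) =
  eheights_aux h w1 ++ eheights_aux (h + cN w1) w2.
Proof.
elim: w1 h => [|c w1 IH] h /=; first by rewrite addn0.
case: c => /=; rewrite IH //; congr (_ ++ _); congr eheights_aux; li.
Qed.

Lemma size_nab x w : size (nabscissae_aux x w) = cN w.
Proof. by elim: w x => [|[] w IH] x //=; rewrite IH. Qed.

Lemma size_eh h w : size (eheights_aux h w) = cE w.
Proof. by elim: w h => [|[] w IH] h //=; rewrite IH. Qed.

Lemma nab_bounds x w r d : (r < cN w)%N ->
  (x <= nth d (nabscissae_aux x w) r <= x + cE w)%N.
Proof.
elim: w x r => [|[] w IH] x r //=; rewrite ?cEs.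
  case: r => [|r] H /=; first li.
  have := IH x r H; li.
move=> H; have := IH x.+1 r H; li.
Qed.

Lemma nab_mono x w r1 r2 : (r1 <= r2)%N ->
  (nth (x + cE w) (nabscissae_aux x w) r1 <= nth (x + cE w) (nabscissae_aux x w) r2)%N.
Proof.
elim: w x r1 r2 => [|[] w IH] x r1 r2 /=; rewrite ?cEs; first by rewrite !nth_nil.
  case: r1 => [|r1]; case: r2 => [|r2] //= H.
    case: (ltnP r2 (cN w)) => Hr.
      by have := nab_bounds x (x + cE w) Hr; li.
    by rewrite nth_default ?size_nab // leq_addr.
  exact: (IH x r1 r2 H).
move=> H; have := IH x.+1 r1 r2 H; rewrite addSnnS.
by [].
Qed.

Lemma nab_ge x w r d : (x <= d)%N -> (x <= nth d (nabscissae_aux x w) r)%N.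
Proof.
move=> xd; case: (ltnP r (cN w)) => Hr; first by have := nab_bounds x d Hr; li.
by rewrite nth_default // size_nab.
Qed.

Lemma eh_bounds h w x d : (x < cE w)%N ->
  (h <= nth d (eheights_aux h w) x <= h + cN w)%N.
Proof.
elim: w h x => [|[] w IH] h x //=; rewrite ?cEs.
  move=> H; have := IH h.+1 x H; li.
case: x => [|x] H /=; first li.
have := IH h x H; li.
Qed.

Definition X (w : walk) (r : nat) : nat := nth (cE w) (nabscissae w) r.

Lemma X_mono w r1 r2 : (r1 <= r2)%N -> (X w r1 <= X w r2)%N.
Proof. by move=> H; have := nab_mono 0 w H. Qed.

Lemma X_le w r : (X w r <= cE w)%N.
Proof.
rewrite /X /nabscissae; case: (ltnP r (cN w)) => Hr; first by have := nab_bounds 0 (cE w) Hr; li.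
by rewrite nth_default // size_nab.
Qed.

Lemma X_top w r : (cN w <= r)%N -> X w r = cE w.
Proof. by move=> H; rewrite /X nth_default // size_nab. Qed.

Lemma xprimeE nu y : xprime nu y = X nu y.
Proof. by []. Qed.

Lemma galois_aux w h x x' r d1 d2 : (x' < cE w)%N -> (r < cN w)%N ->
  (nth d1 (eheights_aux h w) x' <= h + r)%N = (x + x' < nth d2 (nabscissae_aux x w) r)%N.
Proof.
elim: w h x x' r => [|[] w IH] h x x' r /=; first by rewrite cE_nil.
- rewrite cE_N cN_N => Hx Hr; case: r Hr => [|r] Hr /=.
    have := eh_bounds h.+1 d1 Hx; rewrite addn0; move=> H.
    apply/idP/idP; lia.
  rewrite -(IH h.+1 x x' r) //; first by rewrite addSnnS.
- rewrite cE_E cN_E => Hx Hr; case: x' Hx => [|x'] Hx /=.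
    have := nab_bounds x.+1 d2 Hr; move=> H.
    apply/idP/idP; lia.
  rewrite (IH h x.+1 x' r) //; first by rewrite addSnnS.
Qed.

Lemma galois w x r : (x < cE w)%N -> (r < cN w)%N ->
  (nth 0 (eheights w) x <= r)%N = (x < X w r)%N.
Proof. by move=> H1 H2; have := galois_aux 0 0 0 (cE w) H1 H2. Qed.

Lemma eh_le w x : (nth 0 (eheights w) x <= cN w)%N.
Proof.
rewrite /eheights; case: (ltnP x (cE w)) => Hx; first by have := eh_bounds 0 0 Hx; lia.
by rewrite nth_default // size_eh.
Qed.

Lemma endpointE w : endpoint w = (cE w, cN w).
Proof. by []. Qed.

Lemma above_X g' g : above g' g <->
  (cE g' = cE g /\ cN g' = cN g) /\ (forall r, (X g' r <= X g r)%N).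
Proof.
rewrite /above !endpointE; split.
- move=> [[H1 H2] H]; split => // r.
  case: (ltnP r (cN g)) => Hr; last by rewrite !X_top ?H1 ?H2.
  rewrite leqNgt; apply/negP => Hlt.
  have Hx : (X g r < cE g)%N by have := X_le g' r; lia.
  have := H (X g r); rewrite size_eh => /(_ Hx); apply.
  have E1 : (nth 0 (eheights g') (X g r) <= r)%N.
    by rewrite galois ?H1 ?H2.
  have E2 : ~~ (nth 0 (eheights g) (X g r) <= r)%N.
    by rewrite galois // ltnn.
  lia.
- move=> [[H1 H2] H]; split; first by rewrite H1 H2.
  move=> x; rewrite size_eh => Hx Hlt.
  set r := nth 0 (eheights g') x.
  have Hr : (r < cN g)%N by have := eh_le g x; lia.
  have E1 : (x < X g' r)%N by rewrite -galois ?H1 ?H2.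
  have E2 : ~~ (x < X g r)%N by rewrite -galois // -ltnNge.
  have := H r; lia.
Qed.

Lemma nab_head_ge x w y s : nabscissae_aux x w = y :: s -> (x <= y)%N.
Proof.
move=> H; have := nab_ge w 0 (d := x) (leqnn x); rewrite H /=; lia.
Qed.

Lemma walk_eq_aux x w1 w2 : nabscissae_aux x w1 = nabscissae_aux x w2 ->
  cE w1 = cE w2 -> w1 = w2.
Proof.
elim: w1 x w2 => [|c1 w1 IH] x w2.
  case: w2 => [|c2 w2] //=; case: c2 => /=; first by [].
  by rewrite cE_E cE_nil.
case: w2 => [|c2 w2].
  case: c1 => /=; first by [].
  by rewrite cE_E cE_nil.
case: c1; case: c2 => /=.
- move=> [H]; rewrite !cE_N => H2; by rewrite (IH x w2).
- move=> H; have := nab_head_ge (esym H); lia.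
- move=> H; have := nab_head_ge H; lia.
- by rewrite !cE_E => H [] H2; rewrite (IH x.+1 w2).
Qed.

Lemma walk_eq w1 w2 : cE w1 = cE w2 -> cN w1 = cN w2 ->
  (forall r, (r < cN w1)%N -> X w1 r = X w2 r) -> w1 = w2.
Proof.
move=> H1 H2 H; apply: (walk_eq_aux (x := 0)) => //.
apply: (@eq_from_nth _ 0); first by rewrite !size_nab.
move=> r; rewrite size_nab => Hr.
have := H r Hr; rewrite /X /nabscissae.
by rewrite (set_nth_default 0 (cE w1)) ?size_nab // (set_nth_default 0 (cE w2)) ?size_nab // -H2.
Qed.

Lemma cE_rev w : cE (rev w) = cE w. Proof. by rewrite /cE count_rev. Qed.
Lemma cN_rev w : cN (rev w) = cN w. Proof. by rewrite /cN count_rev. Qed.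

Lemma nab_shift x w : nabscissae_aux x w = map (addn x) (nabscissae w).
Proof.
rewrite /nabscissae; elim: w x => [|[] w IHw] x //=.
- by rewrite IHw addn0.
- by rewrite IHw [in RHS]IHw -map_comp; apply: eq_map => y /=; lia.
Qed.

Lemma nab_rev w : nabscissae (rev w) = rev (map (fun x => cE w - x)%N (nabscissae w)).
Proof.
elim: w => [|c w IH] //.
rewrite rev_cons -cats1 /nabscissae nab_cat -/(nabscissae (rev w)) IH cE_rev.
case: c => /=.
- by rewrite cE_N subn0 add0n rev_cons -cats1.
- rewrite cats0 cE_E nab_shift -map_comp; congr rev.
Qed.

Lemma X_rev w r : (r < cN w)%N -> X (rev w) r = (cE w - X w (cN w - r.+1))%N.
Proof.
move=> Hr; rewrite /X nab_rev cE_rev.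
rewrite (set_nth_default 0) ?size_rev ?size_map ?size_nab //.
rewrite nth_rev ?size_map ?size_nab //.
rewrite (nth_map 0) ?size_nab; last lia.
rewrite (set_nth_default 0 (cE w)) // size_nab; lia.
Qed.

End Part2.
Import Part2.

Module Part3.

Lemma size_cEN (s : walk) : size s = (cE s + cN s)%N.
Proof. by elim: s => [|[] s IH] //=; rewrite ?cEs IH; lia. Qed.

Lemma cE_rcons (s : walk) c : cE (rcons s c) = (cE s + (c == E))%N.
Proof. by rewrite -cats1 cE_cat; case: c. Qed.
Lemma cN_rcons (s : walk) c : cN (rcons s c) = (cN s + (c == N))%N.
Proof. by rewrite -cats1 cN_cat; case: c. Qed.

Lemma nth_N_exists (s : walk) m : (m < cN s)%N ->
  exists u, [/\ (u < size s)%N, nth N s u = N & cN (take u s) = m].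
Proof.
elim: s m => [|c s IH] m; first by rewrite cN_nil.
case: c; rewrite ?cEs => Hm.
- case: m Hm => [|m] Hm; first by exists 0%N.
  have [u [H1 H2 H3]] := IH m (ltac:(lia)).
  by exists u.+1; split => //=; rewrite cN_N H3.
- have [u [H1 H2 H3]] := IH m Hm.
  by exists u.+1; split => //=; rewrite cN_E H3.
Qed.

Lemma nab_at (s : walk) x u d : (u < size s)%N -> nth N s u = N ->
  nth d (nabscissae_aux x s) (cN (take u s)) = (x + cE (take u s))%N.
Proof.
move=> Hu Hn.
have Hs : s = take u s ++ N :: drop u.+1 s by rewrite -Hn -drop_nth // cat_take_drop.
rewrite [in nabscissae_aux _ s]Hs nab_cat nth_cat size_nab ltnn subnn /=.
by [].
Qed.

Local Open Scope ring_scope.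

Lemma point_take g k : point g k = (cE (take k g), cN (take k g)).
Proof. by []. Qed.

Lemma ellE nu g k : ell nu g k = (X nu (cN (take k g)))%:Z - (cE (take k g))%:Z.
Proof. by []. Qed.

Lemma ell_stepE nu g m : (m < size g)%N -> nth N g m = E ->
  ell nu g m.+1 = ell nu g m - 1.
Proof.
move=> Hm He; rewrite !ellE (take_nth N Hm) He cE_rcons cN_rcons /=.
rewrite addn0 addn1; lia.
Qed.

Lemma ell_stepN nu g m : (m < size g)%N -> nth N g m = N ->
  ell nu g m <= ell nu g m.+1.
Proof.
move=> Hm He; rewrite !ellE (take_nth N Hm) He cE_rcons cN_rcons /=.
rewrite addn0 addn1.
have := X_mono nu (leqnSn (cN (take m g))); lia.
Qed.

Lemma decomp (g : walk) k k' : (0 < k)%N -> (k < k')%N -> (k' <= size g)%N ->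
  nth N g k.-1 = E ->
  g = take k.-1 g ++ E :: drop k (take k' g) ++ drop k' g.
Proof.
move=> k0 kk' k'g He.
rewrite -{1}(cat_take_drop k.-1 g); congr (_ ++ _).
rewrite (drop_nth N); last lia.
rewrite He prednK //; congr (_ :: _).
rewrite -{1}(cat_take_drop k' g) drop_cat size_takel //.
by case: ifP => //; lia.
Qed.

Lemma take_decomp (P S Q : walk) u : (u <= size S)%N ->
  take (size P + u.+1) (P ++ E :: S ++ Q) = P ++ E :: take u S.
Proof.
move=> Hu; rewrite take_cat ifF; last lia.
have -> : (size P + u.+1 - size P = u.+1)%N by lia.
by rewrite /= takel_cat.
Qed.

Lemma X_split (P S Q : walk) r :
  [/\ X (P ++ S ++ E :: Q) r = (X (P ++ E :: S ++ Q) r - ((cN P <= r) && (r < cN P + cN S)))%N,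
      ((cN P <= r) && (r < cN P + cN S) -> 1 <= X (P ++ E :: S ++ Q) r)%N,
      cE (P ++ S ++ E :: Q) = cE (P ++ E :: S ++ Q) &
      cN (P ++ S ++ E :: Q) = cN (P ++ E :: S ++ Q)].
Proof.
have cE1 : cE (P ++ S ++ E :: Q) = cE (P ++ E :: S ++ Q).
  by rewrite !cE_cat !cEs !cE_cat; lia.
have cN1 : cN (P ++ S ++ E :: Q) = cN (P ++ E :: S ++ Q).
  by rewrite !cN_cat !cEs !cN_cat.
rewrite /X /nabscissae cE1 !nab_cat /= !nab_cat /=.
set d := cE (P ++ E :: S ++ Q).
have -> : ((0 + cE P).+1 + cE S = 0 + cE P + cE S + 1)%N by lia.
rewrite addn1.
rewrite !nth_cat !size_nab.
case: (ltnP r (cN P)) => H1 /=.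
  split => //; lia.
case: (ltnP (r - cN P) (cN S)) => H2 /=.
  rewrite !nab_shift !(nth_map 0) ?size_nab //.
  have -> : (r < cN P + cN S)%N by lia.
  split => //=; lia.
have -> : (r < cN P + cN S)%N = false by lia.
by split => //=; rewrite subn0.
Qed.

Definition alphaR (nu g : walk) (r : nat) : int := (X nu r)%:Z - (X g r)%:Z.

Lemma X_at (g : walk) m : (m < size g)%N -> nth N g m = N ->
  X g (cN (take m g)) = cE (take m g).
Proof. by move=> H1 H2; rewrite /X /nabscissae nab_at. Qed.

Lemma alpha_ell nu (g : walk) m : (m < size g)%N -> nth N g m = N ->
  alphaR nu g (cN (take m g)) = ell nu g m.
Proof. by move=> H1 H2; rewrite /alphaR X_at // ellE. Qed.

Lemma X_ge_take (g : walk) m : (cE (take m g) <= X g (cN (take m g)))%N.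
Proof.
rewrite /X /nabscissae -{2 3}(cat_take_drop m g) nab_cat nth_cat size_nab ltnn subnn.
apply: nab_ge; rewrite cE_cat; lia.
Qed.

Lemma cN_take_mono (g : walk) a b : (a <= b)%N -> (cN (take a g) <= cN (take b g))%N.
Proof.
move=> ab; rewrite -(cat_take_drop a (take b g)) take_takel // cN_cat; lia.
Qed.

Lemma cN_take_le (g : walk) a : (cN (take a g) <= cN g)%N.
Proof. by rewrite -{2}(cat_take_drop a g) cN_cat; lia. Qed.

Lemma cN_take_S (g : walk) m : (m < size g)%N ->
  cN (take m.+1 g) = (cN (take m g) + (nth N g m == N))%N.
Proof. by move=> H; rewrite (take_nth N H) cN_rcons. Qed.

Lemma ivt_N (g : walk) a b t : (a <= b)%N -> (b <= size g)%N ->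
  (cN (take a g) <= t)%N -> (t < cN (take b g))%N ->
  exists m, [/\ (a <= m < b)%N, nth N g m = N & cN (take m g) = t].
Proof.
move=> ab; elim: b ab => [|b IH] ab bg H1 H2.
  have a0 : a = 0%N by lia.
  by move: H1 H2; rewrite a0; lia.
case: (ltnP a b.+1) => Hab; last first.
  have E1 : a = b.+1 by lia.
  by move: H1 H2; rewrite E1; lia.
have Hb := cN_take_S (ltac:(lia) : (b < size g)%N).
case: (ltnP t (cN (take b g))) => Ht.
  have [m [M1 M2 M3]] := IH (ltac:(lia)) (ltac:(lia)) H1 Ht.
  by exists m; split => //; lia.
exists b; split; [lia| |].
- move: H2; rewrite Hb; case: (nth N g b) => //=; lia.
- move: H2; rewrite Hb; case: (nth N g b) => /=; lia.
Qed.

Lemma ell_gt nu (g : walk) k k' : (k < k')%N -> (k' <= size g)%N -> nth N g k = N ->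
  (forall m, (k < m)%N -> (m < k')%N -> ell nu g m <> ell nu g k) ->
  forall m, (k < m)%N -> (m < k')%N -> ell nu g k < ell nu g m.
Proof.
move=> kk' k'g Hk Hne; elim=> [|m IH] // Hm1 Hm2.
have Hmg : (m < size g)%N by lia.
case: (ltnP k m) => Hkm.
  have IHm := IH Hkm (ltac:(lia)).
  have Hne' := Hne m.+1 Hm1 Hm2.
  case E1 : (nth N g m).
  - have := ell_stepN nu Hmg E1; lia.
  - have := ell_stepE nu Hmg E1; lia.
have Ekm : m = k by lia.
have := ell_stepN nu Hmg; rewrite Ekm => /(_ Hk).
have := Hne m.+1 Hm1 Hm2; rewrite Ekm; lia.
Qed.

Definition pushed (g : walk) k k' := take k.-1 g ++ drop k (take k' g) ++ E :: drop k' g.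

Lemma coreA nu (g : walk) k k' : (0 < k)%N -> (k < k')%N -> (k' <= size g)%N ->
  nth N g k.-1 = E -> nth N g k = N -> ell nu g k' = ell nu g k ->
  (forall m, (k < m)%N -> (m < k')%N -> ell nu g m <> ell nu g k) ->
  let y0 := cN (take k g) in let y1 := cN (take k' g) in
  [/\ (y0 < y1 <= cN g)%N,
      (forall r, X (pushed g k k') r = (X g r - ((y0 <= r) && (r < y1)))%N) /\
      (forall r, (y0 <= r < y1)%N -> (1 <= X g r)%N),
      cE (pushed g k k') = cE g /\ cN (pushed g k k') = cN g,
      (forall t, (y0 < t < y1)%N -> alphaR nu g y0 < alphaR nu g t) &
      alphaR nu g y1 <= alphaR nu g y0].
Proof.
move=> k0 kk' k'g Hkm1 Hk Hell Hne y0 y1.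
have kg : (k < size g)%N by lia.
have Hgt := ell_gt kk' k'g Hk Hne.
have Hy0 : alphaR nu g y0 = ell nu g k by apply: alpha_ell.
have y01 : (y0 < y1)%N.
  have := cN_take_mono g (ltac:(lia) : (k.+1 <= k')%N).
  rewrite /y0 /y1 cN_take_S // Hk /=; lia.
split.
- by rewrite y01 /y1 cN_take_le.
- have Hg := decomp k0 kk' k'g Hkm1.
  rewrite /pushed; move: Hg.
  set P := take k.-1 g; set S := drop k (take k' g); set Q := drop k' g => Hg.
  have sP : size P = k.-1 by rewrite /P size_takel //; lia.
  have sS : size S = (k' - k)%N by rewrite /S size_drop size_takel.
  have Ey0 : y0 = cN P.
    rewrite /y0 Hg -(prednK k0) -sP -addn1 -[(size P + 1)%N]/(size P + 0.+1)%N.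
    by rewrite take_decomp // take0 cN_cat cN_E cN_nil addn0.
  have Ey1 : y1 = (cN P + cN S)%N.
    rewrite /y1 Hg.
    have -> : k' = (size P + (size S).+1)%N by lia.
    by rewrite take_decomp // take_size cN_cat cN_E.
  split => r; have [K1 K2 K3 K4] := X_split P S Q r; rewrite -Hg in K1 K2 K3 K4;
    rewrite Ey0 Ey1 //.
- have Hg := decomp k0 kk' k'g Hkm1.
  rewrite /pushed; move: Hg.
  set P := take k.-1 g; set S := drop k (take k' g); set Q := drop k' g => Hg.
  have [K1 K2 K3 K4] := X_split P S Q 0; rewrite -Hg in K1 K2 K3 K4.
  by [].
- move=> t /andP[t1 t2].
  have [m [M1 M2 M3]] := ivt_N (ltac:(lia) : (k <= k')%N) k'g (ltac:(lia) : (cN (take k g) <= t)%N) t2.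
  have mk : m != k by apply/eqP => Emk; move: M3 t1; rewrite Emk /y0; lia.
  rewrite Hy0 -M3 alpha_ell //; last lia.
  apply: Hgt; lia.
- rewrite Hy0 -Hell /alphaR ellE.
  have := X_ge_take g k'; rewrite -/y1; lia.
Qed.

Lemma cE_take_S (g : walk) m : (m < size g)%N ->
  cE (take m.+1 g) = (cE (take m g) + (nth N g m == E))%N.
Proof. by move=> H; rewrite (take_nth N H) cE_rcons. Qed.

Lemma coreB nu (g : walk) y0 : above g nu -> (y0 < cN g)%N ->
  ((if y0 is y.+1 then X g y else 0%N) < X g y0)%N ->
  exists k k', [/\ (0 < k)%N /\ (k < k')%N /\ (k' <= size g)%N,
     nth N g k.-1 = E /\ nth N g k = N, ell nu g k' = ell nu g k,
     (forall m, (k < m)%N -> (m < k')%N -> ell nu g m <> ell nu g k) &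
     cN (take k g) = y0].
Proof.
move=> Hab Hy0 Hv.
have [[HcE HcN] HX] := (above_X g nu).1 Hab.
have [u [U1 U2 U3]] := nth_N_exists Hy0.
have HXu : X g y0 = cE (take u g) by rewrite -U3 X_at.
have u0 : (0 < u)%N.
  case: u U1 U2 U3 HXu => [|u] //= _ _ _; rewrite take0 cE_nil => E0; move: Hv; rewrite E0; lia.
have Hum1 : nth N g u.-1 = E.
  case E1 : (nth N g u.-1) => //.
  have Hs : (u.-1 < size g)%N by lia.
  have C1 := cN_take_S Hs; have C2 := cE_take_S Hs.
  rewrite prednK // E1 /= in C1 C2.
  move: Hv; case: y0 Hy0 U3 HXu => [|y] Hy0 U3 HXu.
    by move: C1; rewrite U3; lia.
  have Hy : cN (take u.-1 g) = y by move: C1; rewrite U3; lia.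
  have := X_at Hs E1; rewrite Hy => ->; rewrite HXu C2; lia.
set l := ell nu g u.
have l0 : 0 <= l.
  rewrite /l -alpha_ell // U3 /alphaR; have := HX y0; lia.
have Hend : ell nu g (size g) = 0.
  rewrite ellE take_size HcN X_top // HcE; lia.
pose Pm := fun m => [&& (u < m)%N, (m <= size g)%N & ell nu g m <= l].
have exP : exists m, Pm m.
  by exists (size g); rewrite /Pm U1 leqnn Hend l0.
case: (ex_minnP exP) => k' /and3P[K1 K2 K3] Kmin.
have Hbetween : forall m, (u < m)%N -> (m < k')%N -> l < ell nu g m.
  move=> m m1 m2; rewrite ltNge; apply/negP => Hm.
  have : (k' <= m)%N by apply: Kmin; rewrite /Pm m1 Hm /= andbT; lia.
  lia.
exists u, k'; split => //.
- apply/eqP; rewrite eq_le K3 /=.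
  case: (k' =P u.+1) => [Ek|Hk].
    by rewrite Ek; apply: ell_stepN.
  have Hk1 : (k'.-1 < size g)%N by lia.
  have Hb := Hbetween k'.-1 (ltac:(lia)) (ltac:(lia)).
  case E1 : (nth N g k'.-1).
  + have := ell_stepN nu Hk1 E1; rewrite prednK; lia.
  + have := ell_stepE nu Hk1 E1; rewrite prednK; lia.
- move=> m m1 m2; have := Hbetween m m1 m2; rewrite -/l; lia.
Qed.

End Part3.
Import Part3.

Module Part4.
Local Open Scope ring_scope.

Definition Xs (w : walk) (t : nat) : nat := if t is t'.+1 then X w t' else 0%N.
Definition alpha (nu g : walk) (t : nat) : int := (Xs nu t)%:Z - (Xs g t)%:Z.
Definition beta (g g' : walk) (t : nat) : int := (Xs g t)%:Z - (Xs g' t)%:Z.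
Definition NF (nu g g' : walk) := ~ Fail (alpha nu g) (beta g g') (cN nu).+1.

Lemma FailAt_ext (a b a' b' : nat -> int) s r :
  (forall t, a t = a' t) -> (forall t, b t = b' t) -> FailAt a b s r -> FailAt a' b' s r.
Proof.
move=> Ha Hb [sr H]; split => // t st tr; rewrite -!Ha -!Hb; exact: H.
Qed.

Lemma push_alpha_beta nu (g g1 g' : walk) y0 y1 :
  (forall r, X g1 r = (X g r - ((y0 <= r) && (r < y1)))%N) ->
  (forall r, (y0 <= r < y1)%N -> (1 <= X g r)%N) ->
  (forall t, alpha nu g1 t = alpha nu g t + ind y0.+1 y1.+1 t) /\
  (forall t, beta g1 g' t = beta g g' t - ind y0.+1 y1.+1 t).
Proof.
move=> HX H1; split => [[|t]|[|t]]; rewrite /alpha /beta /ind //=; rewrite HX;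
  case: (boolP ((y0 <= t) && (t < y1))%N) => Ht /=; rewrite ?subn0; try lia;
  have := H1 t Ht; lia.
Qed.

Lemma charA nu (g g' : walk) : tam_le nu g g' -> NF nu g g'.
Proof.
move=> H; have {H} H := clos_rt_rt1n _ _ _ _ H; elim: H => [x|x y z [Hx Hy Hp] Hyz IH].
  move=> [s [r [rn [sr H]]]]; have := (H r sr (leqnn r)).2; rewrite /beta; lia.
move: Hp => [k [k' [[k0 kk' k'g] [[He Hn] [Hell [Hne Ey]]]]]].
have [A1 [A2 A3] A4 A5 A6] := coreA k0 kk' k'g He Hn Hell Hne.
rewrite -/(pushed x k k') in Ey; subst y.
set y0 := cN (take k x) in A1 A2 A3 A5 A6; set y1 := cN (take k' x) in A1 A2 A3 A5 A6.
have [Ea Eb] := push_alpha_beta nu z A2 A3.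
move=> [s [r [rn Hf]]]; apply: IH; exists s, r; split => //.
apply: (FailAt_ext (a := fun t => alpha nu x t + ind y0.+1 y1.+1 t)
                   (b := fun t => beta x z t - ind y0.+1 y1.+1 t)).
- by move=> t; rewrite Ea.
- by move=> t; rewrite Eb.
apply: seqA Hf; first lia.
- case=> [|t] // H1 H2; have := A5 t (ltac:(lia)); by rewrite /alphaR /alpha /=.
- by have := A6; rewrite /alphaR /alpha /=.
Qed.

Lemma sumn_lt (f h : nat -> nat) (s : seq nat) : (forall x, (f x <= h x)%N) ->
  (exists2 x, x \in s & (f x < h x)%N) -> (sumn (map f s) < sumn (map h s))%N.
Proof.
move=> Hle [x xs Hx]; elim: s xs => [|y s IH] //=.
rewrite in_cons => /orP[/eqP Exy|xs].
  have := Hle y; rewrite -Exy; have : (sumn (map f s) <= sumn (map h s))%N.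
    by elim: (s) => [|z s' IH'] //=; have := Hle z; lia.
  lia.
have := IH xs; have := Hle y; lia.
Qed.

Definition mu (nu g : walk) := sumn (map (X g) (iota 0 (cN nu))).

Lemma charB_step nu (g g' : walk) : above g nu -> above g' nu ->
  (forall r, (X g' r <= X g r)%N) -> NF nu g g' ->
  ~ (forall r, (r < cN nu)%N -> X g r = X g' r) ->
  exists g1, [/\ above g1 nu, push_step nu g g1, (forall r, (X g' r <= X g1 r)%N),
                 NF nu g1 g' & (mu nu g1 < mu nu g)%N].
Proof.
move=> Hg Hg' Hle Hnf Heq.
have [[HcE HcN] HXg] := (above_X g nu).1 Hg.
have exP : exists r, (r < cN nu)%N && (X g' r < X g r)%N.
  apply: NNPP => Hn; apply: Heq => r Hr.
  have : ~ (X g' r < X g r)%N by move=> Hlt; apply: Hn; exists r; rewrite Hr Hlt.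
  have := Hle r; lia.
case: (ex_minnP exP) => y0 /andP[Y1 Y2] Ymin.
have Hbefore : forall t, (t < y0)%N -> X g t = X g' t.
  move=> t ty.
  have : ~ (X g' t < X g t)%N.
    move=> Hlt; have : (y0 <= t)%N by apply: Ymin; rewrite Hlt andbT; lia.
    lia.
  have := Hle t; lia.
have Hv : ((if y0 is y.+1 then X g y else 0%N) < X g y0)%N.
  case: (y0) Y1 Y2 Hbefore => [|y] Y1 Y2 Hb; first lia.
  rewrite Hb //; have := X_mono g' (leqnSn y); lia.
have [k [k' [[k0 [kk' k'g]] [He Hn] Hell Hne Hk]]] := coreB Hg (ltac:(lia) : (y0 < cN g)%N) Hv.
have [A1 [A2 A3] [A4 A4'] A5 A6] := coreA k0 kk' k'g He Hn Hell Hne.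
rewrite Hk in A1 A2 A3 A5 A6.
set y1 := cN (take k' g) in A1 A2 A3 A5 A6.
have [Ea Eb] := push_alpha_beta nu g' A2 A3.
have S1 : forall s r, (r <= (cN nu).+1)%N -> ~ FailAt (alpha nu g) (beta g g') s r.
  by move=> s r rn Hf; apply: Hnf; exists s, r; split.
have S2 : forall t, (t < y0.+1)%N -> beta g g' t = 0.
  case=> [|t] Ht; rewrite /beta //=; rewrite Hbefore //; lia.
have S3 : forall t, (t <= (cN nu).+1)%N -> 0 <= beta g g' t.
  case=> [|t] Ht; rewrite /beta //=; have := Hle t; lia.
have S4 : 0 < beta g g' y0.+1 by rewrite /beta /=; lia.
have S5 : (y0.+1 < y1.+1)%N by lia.
have S6 : (y1.+1 <= (cN nu).+1)%N by lia.
have S7 : forall t, (y0.+1 < t)%N -> (t < y1.+1)%N -> alpha nu g y0.+1 < alpha nu g t.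
  case=> [|t] // H1 H2; have := A5 t (ltac:(lia)); by rewrite /alphaR /alpha /=.
have S8 : alpha nu g y1.+1 <= alpha nu g y0.+1.
  by have := A6; rewrite /alphaR /alpha /=.
have [B1 B2] := seqB S1 S2 S3 S4 S5 S6 S7 S8.
exists (pushed g k k'); split.
- apply/above_X; split; first by rewrite A4 A4' HcE HcN.
  move=> r; rewrite A2; have := HXg r; lia.
- exists k, k'; split; first by split.
  by split => //; split => //; split.
- move=> r; rewrite A2; case: (boolP ((y0 <= r) && (r < y1))%N) => Hr /=; last by rewrite subn0.
  have := B1 r.+1 (ltac:(lia)) (ltac:(lia)); rewrite /beta /=; lia.
- move=> [s [r [rn Hf]]]; apply: (B2 s r rn).
  apply: (FailAt_ext (a := alpha nu (pushed g k k')) (b := beta (pushed g k k') g')) Hf.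
  + by move=> t; rewrite Ea.
  + by move=> t; rewrite Eb.
- rewrite /mu; apply: sumn_lt.
  + by move=> r; rewrite A2; lia.
  + exists y0; first by rewrite mem_iota; lia.
    rewrite A2; have := A3 y0 (ltac:(lia)); rewrite leqnn /=; lia.
Qed.

Lemma charB nu (g g' : walk) : above g nu -> above g' nu ->
  (forall r, (X g' r <= X g r)%N) -> NF nu g g' -> tam_le nu g g'.
Proof.
move=> Hg Hg'; move: {2}(mu nu g) (leqnn (mu nu g)) => M.
elim: M g Hg => [|M IH] g Hg HM Hle Hnf;
  have [[HcE HcN] HXg] := (above_X g nu).1 Hg;
  have [[HcE' HcN'] HXg'] := (above_X g' nu).1 Hg';
  (case: (classic (forall r, (r < cN nu)%N -> X g r = X g' r)) => Heq;
   [ have -> : g = g' by apply: walk_eq => //; [lia|lia|move=> r Hr; apply: Heq; lia]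
   | have [g1 [G1 G2 G3 G4 G5]] := charB_step Hg Hg' Hle Hnf Heq ]).
- exact: rt_refl.
- lia.
- exact: rt_refl.
- apply: rt_trans (rt_step _ _ _ _ _) (IH g1 G1 _ G3 G4); last lia.
  by split.
Qed.

End Part4.
Import Part4.

Module Part5.
Local Open Scope ring_scope.

Lemma above_trans a b c : above a b -> above b c -> above a c.
Proof.
move=> /above_X [[E1 E2] H1] /above_X [[E3 E4] H2]; apply/above_X; split.
  by split; [rewrite E1 E3|rewrite E2 E4].
by move=> r; have := H1 r; have := H2 r; lia.
Qed.

Lemma above_rev a b : above a b -> above (rev b) (rev a).
Proof.
move=> /above_X [[E1 E2] H]; apply/above_X; split.
  by rewrite !cE_rev !cN_rev E1 E2.
move=> r; case: (ltnP r (cN a)) => Hr.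
  rewrite !X_rev -?E2 //; have := H (cN a - r.+1)%N; rewrite E1; have := X_le b (cN a - r.+1); lia.
by rewrite !X_top ?cN_rev -?E2 // !cE_rev E1.
Qed.

Lemma Xs_rev_diff (a b : walk) i j t : cE a = i -> cE b = i -> cN a = j -> cN b = j ->
  (t <= j.+1)%N ->
  (Xs (rev a) t)%:Z - (Xs (rev b) t)%:Z = (Xs b (j.+1 - t))%:Z - (Xs a (j.+1 - t))%:Z.
Proof.
move=> Ea Eb Na Nb Ht; case: t Ht => [|t] Ht /=.
  rewrite !X_top ?Na ?Nb // Ea Eb; lia.
case: (ltnP t j) => Htj.
  rewrite !X_rev ?Na ?Nb //.
  have -> : (j.+1 - t.+1 = (j - t.+1).+1)%N by lia.
  rewrite /=; have := X_le a (j - t.+1); have := X_le b (j - t.+1); rewrite Ea Eb; lia.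
have -> : t = j by lia.
rewrite subnn /= !X_top ?cN_rev ?Na ?Nb // !cE_rev Ea Eb; lia.
Qed.

Lemma NF_rev (glow gmid gup : walk) i j :
  cE glow = i -> cE gmid = i -> cE gup = i -> cN glow = j -> cN gmid = j -> cN gup = j ->
  NF (rev gup) (rev gmid) (rev glow) <-> NF glow gmid gup.
Proof.
move=> E1 E2 E3 N1 N2 N3; rewrite /NF cN_rev N3 N1.
suff : Fail (alpha (rev gup) (rev gmid)) (beta (rev gmid) (rev glow)) j.+1 <->
       Fail (alpha glow gmid) (beta gmid gup) j.+1 by move=> H; split => H1 H2; apply: H1; apply/H.
rewrite [X in _ <-> X]Fail_sym.
have K1 : forall t, (t <= j.+1)%N -> alpha (rev gup) (rev gmid) t = rv j.+1 (beta gmid gup) t.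
  by move=> t Ht; rewrite /rv /alpha /beta (Xs_rev_diff E3 E2 N3 N2 Ht).
have K2 : forall t, (t <= j.+1)%N -> beta (rev gmid) (rev glow) t = rv j.+1 (alpha glow gmid) t.
  by move=> t Ht; rewrite /rv /alpha /beta (Xs_rev_diff E2 E1 N2 N1 Ht).
split; apply: Fail_ext => t Ht; rewrite K1 ?K2 //.
Qed.

Lemma inG_NF i j (glow gmid gup : walk) :
  endpoint glow = (i, j) -> above gup gmid -> above gmid glow ->
  (inG i j glow gmid gup <-> NF glow gmid gup).
Proof.
move=> H1 H4 H5; split.
  by move=> [_ _ _ T]; apply: charA.
move=> Hnf; split => //.
- exact: (above_trans H4 H5).
- apply: charB => //; first exact: (above_trans H4 H5).
  by have [_ H] := (above_X gup gmid).1 H4.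
Qed.


End Part5.
Import Part5.

Theorem corollary1 (i j : nat) (glow gmid gup : walk) :
  inR i j glow gmid gup ->
  (inG i j (mir gup) (mir gmid) (mir glow) <-> inG i j glow gmid gup).
Proof.
move=> [H1 H2 H3 H4 H5].
move: (H1) (H2) (H3); rewrite !endpointE => [[E1 N1]] [[E2 N2]] [[E3 N3]].
rewrite /mir inG_NF //.
- rewrite inG_NF //; exact: NF_rev E1 E2 E3 N1 N2 N3.
- by rewrite endpointE cE_rev cN_rev E3 N3.
- exact: above_rev.
- exact: above_rev.
Qed.
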